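(* Let $(V,f)$ be a cubic space with $\mathrm{rrk}(f)=\infty$. Given a good table $T$ with $r$ rows, there is a good table $T'\supset T$ obtained by adding a new $(r+1)$-st row (consisting of a new element $v_{r+1}$ and no $w$'s).
   Context: $k$ is algebraically closed of characteristic different from $2,3$. For $V$ with basis and dual coordinates $x_i$, $P_n(V)$ is the space of formal, possibly infinite, $k$-linear combinations of degree-$n$ monomials in the $x_i$. The strength of a homogeneous $h\in P_n(V)$, $n\ge1$, is the least $s$ with $h=\sum_{i=1}^s a_ib_i$, $a_i,b_i$ homogeneous of positive degree less than $n$ ($\infty$ if none). $P_2^\circ(V)$ is the subspace of finite-strength quadratic forms and $\overline{P}_2(V)=P_2(V)/P_2^\circ(V)$. For $v\in V$, $f_v=\partial_vf\in P_2(V)$ is the directional derivative (in coordinates $\partial_{v_i}f=\partial f/\partial x_i$), and $\overline{q}(v)$ is the image of $f_v$ in $\overline{P}_2(V)$; $\overline{Q}=\overline{q}(V)$, and $\mathrm{rrk}(f)=\dim\overline{Q}$. $\langle-,-,-\rangle_f$ is the symmetric trilinear form on $V$ with $\langle v,v,v\rangle_f=f(v)$; then $f_v(w)=3\langle v,w,w\rangle_f$. A good table is a finite table with rows $v_i\mid w_{i,1},\dots,w_{i,n_i}$ ($1\le i\le r$, $n_i\ge0$), entries in $V$, such that: (a) the entries are linearly independent; (b) $\langle v_i,w_{i,j},w_{i,j}\rangle_f=1$ for all $i,j$, and whenever $x,y,z$ are entries with $\langle x,y,z\rangle_f\ne0$, then up to permutation $x=v_i$ and $y=z=w_{i,j}$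 for some $i,j$; (c) the elements $\overline{q}(v_i)$ ($1\le i\le r$) together with those $\overline{q}(w_{i,j})$ that are nonzero are pairwise distinct and linearly independent in $\overline{Q}$. *)

(* Defs.v *)
From HB Require Import structures.
From mathcomp Require Import all_boot all_order all_algebra.
Set Implicit Arguments. Unset Strict Implicit. Unset Printing Implicit Defensive.
Import GRing.Theory.
Local Open Scope ring_scope.

Section CubicDefs.
Variables (I : eqType) (k : fieldType).

(* V : the vector space with basis (e_i)_{i : I}, i.e. finitely supported
   coordinate functions I -> k.  vcoef v i = x_i(v). *)
Record vect := Vect {
  vcoef : I -> k;
  vsupp : seq I;
  vsuppP : forall i, i \notin vsupp -> vcoef i = 0 }.

Definition vect0 : vect := @Vect (fun _ => 0) [::] (fun _ _ => erefl).

(* Formal, possibly infinite, linear combinations of monomials in the x_i.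
   A monomial x_{i1}...x_{in} is represented by any word [:: i1; ...; in];
   the coefficient function is required to be invariant under permutation
   of the word, so it is a function on monomials (= finite multisets). *)
Definition fser := seq I -> k.

Definition homog (n : nat) (h : fser) : Prop :=
  (forall s, size s != n -> h s = 0) /\
  (forall s t, perm_eq s t -> h s = h t).

Definition lmul (a b : fser) : fser := fun s =>
  match s with
  | [:: i; j] => if i == j then a [:: i] * b [:: i]
                 else a [:: i] * b [:: j] + a [:: j] * b [:: i]
  | _ => 0
  end.

Definition pd (i : I) (h : fser) : fser := fun s =>
  (count_mem i s).+1%:R * h (i :: s).

Definition fder (v : vect) (h : fser) : fser := fun s =>
  \sum_(i <- undup (vsupp v)) vcoef v i * pd i h s.

Definition fv (f : fser) (v : vect) : fser := fder v f.

(* symmetric trilinear form <u,v,w>_f of a cubic f (so <v,v,v>_f = f(v)):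
   one sixth of the (constant) third derivative d_u d_v d_w f. *)
Definition tri (f : fser) (u v w : vect) : k :=
  6%:R^-1 * fder u (fder v (fder w f)) [::].

Definition fin_strength (h : fser) : Prop :=
  exists (s : nat) (a b : 'I_s -> fser),
    (forall t, homog 1 (a t) /\ homog 1 (b t)) /\
    (forall w, h w = \sum_(t < s) lmul (a t) (b t) w).

(* rrk(f) = infinity : the image Qbar of V in P_2 / P_2^o is
   infinite-dimensional, i.e. contains linearly independent families
   of every finite size. *)
Definition rrk_infinite (f : fser) : Prop :=
  forall n : nat, exists vs : 'I_n -> vect,
    forall c : 'I_n -> k,
      fin_strength (fun w => \sum_(j < n) c j * fv f (vs j) w) ->
      forall j, c j = 0.

(* Tables: a table is a list of rows (v_i, [:: w_{i,1}; ...; w_{i,n_i}]). *)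
Definition table := seq (vect * seq vect).

(* positions of entries: (i, None) is v_i, (i, Some j) is w_{i,j} *)
Definition positions (T : table) : seq (nat * option nat) :=
  flatten [seq (i, None) :: [seq (i, Some j) | j <- iota 0 (size (nth (vect0, [::]) T i).2)]
          | i <- iota 0 (size T)].

Definition entry (T : table) (p : nat * option nat) : vect :=
  let row := nth (vect0, [::]) T p.1 in
  match p.2 with
  | None => row.1
  | Some j => nth vect0 row.2 j
  end.

Definition good_a (T : table) : Prop :=
  forall c : nat * option nat -> k,
    (forall l : I, \sum_(p <- positions T) c p * vcoef (entry T p) l = 0) ->
    forall p, p \in positions T -> c p = 0.

Definition good_b (f : fser) (T : table) : Prop :=
  (forall i j, (i, Some j) \in positions T ->
     tri f (entry T (i, None)) (entry T (i, Some j)) (entry T (i, Some j)) = 1)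
  /\
  (forall p1 p2 p3, p1 \in positions T -> p2 \in positions T -> p3 \in positions T ->
     tri f (entry T p1) (entry T p2) (entry T p3) != 0 ->
     exists i j, (i, Some j) \in positions T /\
       perm_eq [:: p1; p2; p3] [:: (i, None); (i, Some j); (i, Some j)]).

(* the entries whose image qbar(.) is considered in (c):
   all v_i, and those w_{i,j} with qbar(w_{i,j}) <> 0 *)
Definition c_selected (f : fser) (T : table) (p : nat * option nat) : Prop :=
  p.2 = None \/ ~ fin_strength (fv f (entry T p)).

Definition good_c (f : fser) (T : table) : Prop :=
  (forall p p', p \in positions T -> p' \in positions T ->
     c_selected f T p -> c_selected f T p' -> p != p' ->
     ~ fin_strength (fun w => fv f (entry T p) w - fv f (entry T p') w))
  /\
  (forall c : nat * option nat -> k,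
     (forall p, ~ c_selected f T p -> c p = 0) ->
     fin_strength (fun w => \sum_(p <- positions T) c p * fv f (entry T p) w) ->
     forall p, p \in positions T -> c p = 0).

Definition good_table (f : fser) (T : table) : Prop :=
  good_a T /\ good_b f T /\ good_c f T.

End CubicDefs.

(* Main.v *)
Require Import Defs.
From HB Require Import structures.
From mathcomp Require Import all_boot all_order all_algebra.
From Stdlib Require Import Classical.
From mathcomp Require Import ring zify.
Set Implicit Arguments. Unset Strict Implicit. Unset Printing Implicit Defensive.
Import GRing.Theory.
Local Open Scope ring_scope.

Section PartA.
Variables (k : fieldType) (I : eqType).
Local Notation vect := (vect I k).
Local Notation fser := (fser I k).

Lemma fder_any (v : vect) (h : fser) s (L : seq I) :
  uniq L -> (forall i, vcoef v i != 0 -> i \in L) ->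
  fder v h s = \sum_(i <- L) vcoef v i * pd i h s.
Proof.
move=> uL hL; rewrite /fder.
set F := fun i => vcoef v i * pd i h s.
set S0 := undup (vsupp v).
have -> : \sum_(i <- L) vcoef v i * pd i h s = \sum_(i <- L | i \in S0) F i.
  rewrite [RHS]big_mkcond /=; apply: eq_bigr => i _.
  case: ifP => // /negbT; rewrite mem_undup => /vsuppP ->.
  by rewrite /F mul0r.
have -> : \sum_(i <- S0) vcoef v i * pd i h s = \sum_(i <- S0 | i \in L) F i.
  rewrite [RHS]big_mkcond /=; apply: eq_bigr => i _.
  case: ifP => // /negbT Hi.
  have : vcoef v i = 0.
    by apply/eqP; apply/negPn; apply: contra Hi; apply: hL.
  by move->; rewrite /F mul0r.
rewrite -[LHS]big_filter -[RHS]big_filter; apply: perm_big; apply: uniq_perm.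
- by apply: filter_uniq; apply: undup_uniq.
- exact: filter_uniq.
- by move=> i; rewrite !mem_filter andbC.
Qed.

Lemma fder_lin (X : eqType) (r : seq X) (a : X -> k) (u : X -> vect)
   (v : vect) (h : fser) s :
  (forall l, vcoef v l = \sum_(x <- r) a x * vcoef (u x) l) ->
  fder v h s = \sum_(x <- r) a x * fder (u x) h s.
Proof.
move=> Hv.
set L := undup (vsupp v ++ flatten [seq vsupp (u x) | x <- r]).
have uL : uniq L by apply: undup_uniq.
rewrite (@fder_any v h s L uL); last first.
  move=> i Hi; rewrite mem_undup mem_cat; apply/orP; left.
  by apply/negPn; apply: contra Hi => /vsuppP ->.
under eq_bigr => i _ do rewrite Hv mulr_suml.
rewrite exchange_big /= big_seq [RHS]big_seq; apply: eq_bigr => x xr.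
rewrite (@fder_any (u x) h s L uL); last first.
  move=> i Hi; rewrite mem_undup mem_cat; apply/orP; right.
  apply/flatten_mapP; exists x => //.
  by apply/negPn; apply: contra Hi => /vsuppP ->.
by rewrite mulr_sumr; apply: eq_bigr => i _; rewrite mulrA.
Qed.

Lemma fder_ext (v : vect) (h h' : fser) s :
  (forall t, h t = h' t) -> fder v h s = fder v h' s.
Proof. by move=> E; rewrite /fder /pd; apply: eq_bigr => i _; rewrite E. Qed.

Definition psym (h : fser) := forall s t, perm_eq s t -> h s = h t.

Lemma fder_psym v h : psym h -> psym (fder v h).
Proof.
move=> Hh s t st; rewrite /fder /pd; apply: eq_bigr => i _.
rewrite (permP st) (Hh (i :: s) (i :: t)) //.
by rewrite perm_cons.
Qed.

Lemma fder_comm (u v : vect) (h : fser) s : psym h ->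
  fder u (fder v h) s = fder v (fder u h) s.
Proof.
move=> Hh; rewrite /fder /pd.
under eq_bigr => i _ do rewrite mulr_sumr mulr_sumr.
rewrite exchange_big /=; apply: eq_bigr => j _.
rewrite mulr_sumr mulr_sumr; apply: eq_bigr => i _.
rewrite (Hh [:: j, i & s] [:: i, j & s]); last first.
  by apply/permP => p /=; rewrite addnCA.
rewrite /=; case: (eqVneq i j) => [->|nij] //=.
  by ring.
rewrite !add0n; ring.
Qed.

Lemma tri_sym12 (f : fser) u v w : psym f -> tri f u v w = tri f v u w.
Proof. by move=> Hf; rewrite /tri fder_comm //; apply: fder_psym. Qed.

Lemma tri_sym23 (f : fser) u v w : psym f -> tri f u v w = tri f u w v.
Proof. by move=> Hf; rewrite /tri (@fder_ext u _ (fder w (fder v f))) // => t; apply: fder_comm. Qed.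

Definition LC n (v : vect) (a : 'I_n -> k) (u : 'I_n -> vect) :=
  forall l, vcoef v l = \sum_j a j * vcoef (u j) l.

Lemma vlc_supp n (a : 'I_n -> k) (u : 'I_n -> vect) :
  forall i, i \notin flatten [seq vsupp (u j) | j <- enum 'I_n] ->
    \sum_j a j * vcoef (u j) i = 0.
Proof.
move=> i Hi; apply: big1 => j _.
have -> : vcoef (u j) i = 0; last by rewrite mulr0.
apply: vsuppP; apply: contra Hi => Hj.
by apply/flatten_mapP; exists j => //; rewrite mem_enum.
Qed.

Definition vlc n (a : 'I_n -> k) (u : 'I_n -> vect) : vect :=
  Vect (@vlc_supp n a u).

Lemma vlcP n (a : 'I_n -> k) u : LC (vlc a u) a u.
Proof. by []. Qed.

Lemma fder_LC n (v : vect) a (u : 'I_n -> vect) h s :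
  LC v a u -> fder v h s = \sum_j a j * fder (u j) h s.
Proof. by move=> Hv; apply: (@fder_lin _ (index_enum 'I_n)). Qed.

Lemma triL1 (f : fser) n v a (u : 'I_n -> vect) x y :
  LC v a u -> tri f v x y = \sum_j a j * tri f (u j) x y.
Proof.
move=> Hv; rewrite /tri (fder_LC _ _ Hv) mulr_sumr; apply: eq_bigr => j _.
by rewrite mulrCA.
Qed.

Lemma triL2 (f : fser) n v a (u : 'I_n -> vect) x y : psym f ->
  LC v a u -> tri f x v y = \sum_j a j * tri f x (u j) y.
Proof.
move=> Hf Hv; rewrite tri_sym12 // (triL1 _ _ _ Hv); apply: eq_bigr => j _.
by rewrite tri_sym12.
Qed.

Lemma triL3 (f : fser) n v a (u : 'I_n -> vect) x y : psym f ->
  LC v a u -> tri f x y v = \sum_j a j * tri f x y (u j).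
Proof.
move=> Hf Hv; rewrite tri_sym23 // (triL2 x y Hf Hv); apply: eq_bigr => j _.
by rewrite tri_sym23.
Qed.

Lemma fv_LC (f : fser) n v a (u : 'I_n -> vect) w :
  LC v a u -> fv f v w = \sum_j a j * fv f (u j) w.
Proof. by move=> Hv; rewrite /fv (fder_LC _ _ Hv). Qed.

Lemma P0 : fin_strength (fun _ : seq I => 0 : k).
Proof.
exists 0%N, (fun _ => fun _ => 0), (fun _ => fun _ => 0); split.
  by case.
by move=> w; rewrite big_ord0.
Qed.

Lemma Pext (g g' : fser) : fin_strength g -> (forall w, g w = g' w) -> fin_strength g'.
Proof.
move=> [s [a [b [H1 H2]]]] E; exists s, a, b; split => // w.
by rewrite -E H2.
Qed.

Lemma homog_scale n (c : k) (a : fser) : homog n a -> homog n (fun w => c * a w).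
Proof.
move=> [H1 H2]; split; first by move=> s Hs; rewrite H1 // mulr0.
by move=> s t st; rewrite (H2 s t st).
Qed.

Lemma lmul_scale (c : k) (a b : fser) w : lmul (fun w => c * a w) b w = c * lmul a b w.
Proof.
rewrite /lmul; case: w => [|i [|j [|x y]]] //; rewrite ?mulr0 //.
by case: ifP => _; ring.
Qed.

Lemma Padd (g g' : fser) (mu : k) : fin_strength g -> fin_strength g' ->
  fin_strength (fun w => g w + mu * g' w).
Proof.
move=> [s1 [a1 [b1 [H1 E1]]]] [s2 [a2 [b2 [H2 E2]]]].
exists (s1 + s2)%N.
exists (fun t => match split t with inl t1 => a1 t1 | inr t2 => (fun w => mu * a2 t2 w) end).
exists (fun t => match split t with inl t1 => b1 t1 | inr t2 => b2 t2 end).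
split.
  move=> t; case: (split t) => [t1|t2]; first exact: H1.
  by case: (H2 t2) => Ha Hb; split => //; apply: homog_scale.
move=> w; rewrite big_split_ord /=.
rewrite E1 E2 mulr_sumr; congr (_ + _); apply: eq_bigr => t _.
  by rewrite (_ : lshift s2 t = unsplit (inl t)) // unsplitK.
rewrite (_ : rshift s1 t = unsplit (inr t)) // unsplitK.
by rewrite lmul_scale.
Qed.


Section PartB.
Variable f : fser.

Definition indepmod n (u : 'I_n -> vect) (S : fser -> Prop) :=
  forall a : 'I_n -> k, S (fun w => \sum_i a i * fv f (u i) w) -> forall i, a i = 0.
Definition Sext (S : fser -> Prop) := forall g g', (forall w, g w = g' w) -> S g -> S g'.
Definition Sadd (S : fser -> Prop) :=
  forall g g' mu, S g -> S g' -> S (fun w => g w + mu * g' w).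
Definition Sh (S : fser -> Prop) (h : fser) (g : fser) :=
  exists lam, S (fun w => g w + lam * h w).

Lemma Sh_ext S h : Sext S -> Sext (Sh S h).
Proof.
move=> HS g g' E [lam Hl]; exists lam; apply: (HS _ _ _ Hl) => w.
by rewrite E.
Qed.

Lemma Sh_add S h : Sext S -> Sadd S -> Sadd (Sh S h).
Proof.
move=> HS HA g g' mu [l1 H1] [l2 H2]; exists (l1 + mu * l2).
apply: (HS _ _ _ (HA _ _ mu H1 H2)) => w; ring.
Qed.

Lemma sum_delta n (x : 'I_n) (F : 'I_n -> k) : \sum_j (j == x)%:R * F j = F x.
Proof.
rewrite (bigD1 x) //= eqxx mul1r big1 ?addr0 // => j /negbTE ->.
by rewrite mul0r.
Qed.

Lemma comb_sum n m (u : 'I_n -> vect) (u' : 'I_m -> vect) M (g : 'I_m -> k) w :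
  (forall i, LC (u' i) (M i) u) ->
  \sum_i g i * fv f (u' i) w = \sum_j (\sum_i g i * M i j) * fv f (u j) w.
Proof.
move=> HM; under eq_bigr => i _ do rewrite (fv_LC _ _ (HM i)) mulr_sumr.
rewrite exchange_big /=; apply: eq_bigr => j _; rewrite mulr_suml.
by apply: eq_bigr => i _; rewrite mulrA.
Qed.

Lemma indepmod_comb n m (u : 'I_n -> vect) (u' : 'I_m -> vect) M S :
  Sext S -> (forall i, LC (u' i) (M i) u) ->
  (forall g : 'I_m -> k, (forall j, \sum_i g i * M i j = 0) -> forall i, g i = 0) ->
  indepmod u S -> indepmod u' S.
Proof.
move=> HS HM Hrow Hu g Hg; apply: Hrow => j; move: j; apply: Hu.
by apply: (HS _ _ _ Hg) => w; rewrite (comb_sum _ _ HM).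
Qed.

Lemma LC_sel n (u : 'I_n -> vect) x : LC (u x) (fun j => (j == x)%:R) u.
Proof. by move=> l; rewrite sum_delta. Qed.

Lemma indepmod_sel n m (u : 'I_n -> vect) (sig : 'I_m -> 'I_n) S :
  Sext S -> injective sig -> indepmod u S -> indepmod (fun i => u (sig i)) S.
Proof.
move=> HS Hsig; apply: (indepmod_comb (M := fun i j => (j == sig i)%:R)) => //.
  by move=> i; apply: LC_sel.
move=> g Hg i; move: (Hg (sig i)); rewrite (eq_bigr (fun j => (j == i)%:R * g j)).
  by rewrite sum_delta.
by move=> j _; rewrite (inj_eq Hsig) eq_sym mulrC.
Qed.

Lemma S2 S h n (u : 'I_n.+1 -> vect) : Sext S -> Sadd S -> indepmod u S ->
  exists u' : 'I_n -> vect, (forall i, exists j, u' i = u j) /\ indepmod u' (Sh S h).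
Proof.
move=> HS HA Hu.
case: (classic (indepmod u (Sh S h))) => [H|H].
  exists (fun i => u (lift ord0 i)); split; first by move=> i; eexists.
  by apply: indepmod_sel => //; [apply: Sh_ext | apply: lift_inj].
have [a0 [Ha0 Hne]] : exists a0, Sh S h (fun w => \sum_i a0 i * fv f (u i) w) /\
   exists i0, a0 i0 != 0.
  move: H; rewrite /indepmod => /not_all_ex_not [a0 Ha0].
  have [Ha Hn] := imply_to_and _ _ Ha0.
  exists a0; split => //; have [i0 Hi0] := not_all_ex_not _ _ Hn.
  by exists i0; apply/eqP.
case: Hne => i0 Hi0; case: Ha0 => l0 Hl0.
exists (fun i => u (lift i0 i)); split; first by move=> i; eexists.
move=> g [lam Hlam].
set G := fun j : 'I_n.+1 => \sum_i g i * (j == lift i0 i)%:R.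
have HG : forall w, \sum_i g i * fv f (u (lift i0 i)) w = \sum_j G j * fv f (u j) w.
  by move=> w; apply: comb_sum => i; apply: LC_sel.
have HGl : forall i, G (lift i0 i) = g i.
  move=> i; rewrite /G (eq_bigr (fun j => (j == i)%:R * g j)) ?sum_delta //.
  by move=> j _; rewrite (inj_eq lift_inj) eq_sym mulrC.
have HG0 : G i0 = 0.
  by rewrite /G big1 // => j _; rewrite (negbTE (neq_lift _ _)) mulr0.
have l0n : l0 != 0.
  apply/eqP => l00; move/eqP: Hi0; apply; apply: Hu.
  by apply: (HS _ _ _ Hl0) => w; rewrite l00 mul0r addr0.
set mu := - (lam / l0).
have H3 := HA _ _ mu Hlam Hl0.
have H4 : S (fun w => \sum_j (G j + mu * a0 j) * fv f (u j) w).
  apply: (HS _ _ _ H3) => w; rewrite HG.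
  have E : lam * h w + mu * (l0 * h w) = 0.
    by rewrite /mu mulrA mulNr divfK // mulNr addrN.
  rewrite mulrDr addrACA E addr0 mulr_sumr -big_split /=.
  by apply: eq_bigr => j _; rewrite mulrA -mulrDl.
have Hall := Hu _ H4.
have mu0 : mu = 0.
  move: (Hall i0); rewrite HG0 add0r => /eqP; rewrite mulf_eq0 (negbTE Hi0) orbF.
  by move/eqP.
move=> i; rewrite -HGl; move: (Hall (lift i0 i)); by rewrite mu0 mul0r addr0.
Qed.


Fixpoint InL (A : Type) (x : A) (s : seq A) : Prop :=
  if s is y :: s' then y = x \/ InL x s' else False.

Lemma InL_map (A B : Type) (g : A -> B) x s : InL x s -> InL (g x) (map g s).
Proof. by elim: s => //= y s IH [->|H]; [left | right; apply: IH]. Qed.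

Lemma InL_catl (A : Type) (x : A) s1 s2 : InL x s1 -> InL x (s1 ++ s2).
Proof. by elim: s1 => //= y s IH [->|H]; [left | right; apply: IH]. Qed.

Lemma InL_catr (A : Type) (x : A) s1 s2 : InL x s2 -> InL x (s1 ++ s2).
Proof. by elim: s1 => //= y s IH H; right; apply: IH. Qed.

Hypothesis Hf : psym f.

Definition Cons (L1 : seq (vect * vect)) (L2 : seq vect) n (u : 'I_n -> vect) : Prop :=
  (forall a b, InL (a, b) L1 -> forall i, tri f a b (u i) = 0) /\
  (forall e, InL e L2 -> forall i j, tri f e (u i) (u j) = 0).

Definition FamC S L1 L2 n := exists u : 'I_n -> vect, indepmod u S /\ Cons L1 L2 u.

Lemma lin0 n v a (u : 'I_n -> vect) x y :
  LC v a u -> (forall j, tri f x y (u j) = 0) -> tri f x y v = 0.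
Proof.
move=> Hv H; rewrite (triL3 _ _ Hf Hv) big1 // => j _; by rewrite H mulr0.
Qed.

Lemma bil0 n v a w b (u : 'I_n -> vect) e :
  LC v a u -> LC w b u -> (forall i j, tri f e (u i) (u j) = 0) -> tri f e v w = 0.
Proof.
move=> Hv Hw H; rewrite (triL2 _ _ Hf Hv) big1 // => i _.
by rewrite (lin0 Hw) ?mulr0.
Qed.

Lemma Cons_comb L1 L2 n m (u : 'I_n -> vect) (u' : 'I_m -> vect) M :
  (forall i, LC (u' i) (M i) u) -> Cons L1 L2 u -> Cons L1 L2 u'.
Proof.
move=> HM [H1 H2]; split.
  by move=> a b Hab i; apply: (lin0 (HM i)) => j; apply: H1.
by move=> e He i j; apply: (bil0 (HM i) (HM j)) => i' j'; apply: H2.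
Qed.

Lemma FamC_mono S L1 L2 m n : (m <= n)%N -> Sext S -> FamC S L1 L2 n -> FamC S L1 L2 m.
Proof.
move=> Hmn HS [u [Hu [H1 H2]]].
exists (fun i => u (widen_ord Hmn i)); split.
  apply: indepmod_sel => // i j; move/(congr1 val) => /= E; exact: val_inj.
split; first by move=> a b Hab i; apply: H1.
by move=> e He i j; apply: H2.
Qed.

Lemma elim1 S L1 L2 n a' b' : Sext S -> FamC S L1 L2 n.+1 -> FamC S ((a', b') :: L1) L2 n.
Proof.
move=> HS [u [Hu HC]].
set phi := fun x => tri f a' b' x.
have [i0 Hi0] : exists i0, phi (u i0) = 0 -> forall i, phi (u i) = 0.
  case: (classic (forall i, phi (u i) = 0)) => [H|H].
    by exists ord0.
  have [i0 Hi] := not_all_ex_not _ _ H; by exists i0.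
set lam := fun kk => phi (u (lift i0 kk)) / phi (u i0).
set M := fun kk j => (j == lift i0 kk)%:R - lam kk * (j == i0)%:R.
exists (fun kk => vlc (M kk) u); split.
  apply: (indepmod_comb (M := M)) => //.
  move=> g Hg kk; move: (Hg (lift i0 kk)).
  rewrite (eq_bigr (fun j => (j == kk)%:R * g j)) ?sum_delta //.
  move=> j _; rewrite /M (inj_eq lift_inj) eq_sym.
  have -> : (lift i0 kk == i0) = false by apply/negbTE; rewrite eq_sym neq_lift.
  by rewrite mulr0 subr0 mulrC.
have [H1 H2] := Cons_comb (fun kk => vlcP (M kk) u) HC.
split => //.
move=> a b /= [[<- <-]|Hab] i; last by apply: H1.
rewrite (triL3 _ _ Hf (vlcP (M i) u)).
have -> : \sum_j M i j * tri f a' b' (u j) = phi (u (lift i0 i)) - lam i * phi (u i0).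
  rewrite /M; under eq_bigr => j _ do rewrite mulrBl -mulrA.
  by rewrite sumrB sum_delta -mulr_sumr sum_delta.
case: (eqVneq (phi (u i0)) 0) => [E|E].
  by rewrite E (Hi0 E) mulr0 subr0.
by rewrite /lam divfK // subrr.
Qed.

Lemma elim_list S L2 L : forall L1 N, Sext S -> FamC S L1 L2 (N + size L) ->
  FamC S (L ++ L1) L2 N.
Proof.
elim: L => [|[a' b'] L IH] L1 N HS /=; first by rewrite addn0.
rewrite addnS -addSn => H; apply: elim1 => //; exact: IH.
Qed.


Definition cons_fam n (z : vect) (t : 'I_n -> vect) : 'I_n.+1 -> vect :=
  fun i => if unlift ord0 i is Some j then t j else z.

Lemma cons_split n z (t : 'I_n -> vect) (g : 'I_n.+1 -> k) w :
  \sum_i g i * fv f (cons_fam z t i) w =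
  g ord0 * fv f z w + \sum_j g (lift ord0 j) * fv f (t j) w.
Proof.
rewrite big_ord_recl /cons_fam unlift_none; congr (_ + _).
by apply: eq_bigr => j _; rewrite liftK.
Qed.

Lemma cons_fwd S n z (t : 'I_n -> vect) : Sext S ->
  indepmod t (Sh S (fv f z)) -> (forall c, S (fun w => c * fv f z w) -> c = 0) ->
  indepmod (cons_fam z t) S.
Proof.
move=> HS Ht Hz g Hg.
have Hl : forall j, g (lift ord0 j) = 0.
  apply: Ht; exists (g ord0); apply: (HS _ _ _ Hg) => w.
  by rewrite cons_split addrC.
have H0 : g ord0 = 0.
  apply: Hz; apply: (HS _ _ _ Hg) => w; rewrite cons_split big1 ?addr0 //.
  by move=> j _; rewrite Hl mul0r.
by move=> i; case: (unliftP ord0 i) => [j ->|->].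
Qed.

Lemma cons_bwd S n z (t : 'I_n -> vect) : Sext S ->
  indepmod (cons_fam z t) S ->
  indepmod t (Sh S (fv f z)) /\ (forall c, S (fun w => c * fv f z w) -> c = 0).
Proof.
move=> HS H; split.
  move=> g [lam Hl] j.
  pose G := fun i : 'I_n.+1 => if unlift ord0 i is Some j then g j else lam.
  have := H G _ (lift ord0 j); rewrite /G liftK; apply.
  apply: (HS _ _ _ Hl) => w; rewrite cons_split /G unlift_none addrC; congr (_ + _).
  by apply: eq_bigr => i _; rewrite liftK.
move=> c Hc.
pose G := fun i : 'I_n.+1 => if unlift ord0 i is Some j then 0 else c.
have := H G _ ord0; rewrite /G unlift_none; apply.
apply: (HS _ _ _ Hc) => w; rewrite cons_split /G unlift_none big1 ?addr0 //.
by move=> i _; rewrite liftK mul0r.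
Qed.


Hypothesis Hroot2 : forall p q r s : k, exists a b : k,
  ((a != 0) || (b != 0)) /\ a * (a * p + b * q) + b * (a * r + b * s) = 0.

Definition dab m (a b : k) : 'I_m.+2 -> k :=
  fun i => if unlift ord0 i is Some j then (if unlift ord0 j is Some _ then 0 else b) else a.

Lemma sum2 m a b (F : 'I_m.+2 -> k) :
  \sum_i dab a b i * F i = a * F ord0 + b * F (lift ord0 ord0).
Proof.
rewrite big_ord_recl big_ord_recl /dab unlift_none liftK unlift_none.
rewrite big1 ?addr0 // => i _; by rewrite !liftK mul0r.
Qed.

Lemma ISO e : forall N S L1 L2 K, Sext S -> (N * (size L2 + 4) <= K)%N ->
  FamC S L1 L2 K -> FamC S L1 (e :: L2) N.
Proof.
elim=> [|N IH] S L1 L2 K HS HK HF.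
  exists (fun _ => vect0 I k); split; first by move=> ? ? [].
  by split=> [? ? ? []|? ? []].
set c := (size L2 + 4)%N.
set m := (N * c + (size L2).+1)%N.
have Hm : (m.+2 <= K)%N by move: HK; rewrite /m /c mulSn; lia.
have [u [Hu [HC1 HC2]]] := FamC_mono Hm HS HF.
set u1 := u (lift ord0 ord0).
have [a [b [Hab Hq]]] := Hroot2 (tri f e (u ord0) (u ord0)) (tri f e (u ord0) u1)
   (tri f e u1 (u ord0)) (tri f e u1 u1).
set d := @dab m a b.
set z := vlc d u.
have Hzz : tri f e z z = 0.
  rewrite (triL2 _ _ Hf (vlcP d u)) sum2.
  by rewrite !(triL3 _ _ Hf (vlcP d u)) !sum2.
set u'' := fun i : 'I_m => u (lift ord0 (lift ord0 i)).
have Hw : indepmod (cons_fam z u'') S.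
  apply: (indepmod_comb (M := fun i j => if unlift ord0 i is Some i'
     then (j == lift ord0 (lift ord0 i'))%:R else d j) (u := u)) => //.
    move=> i; case: (unliftP ord0 i) => [i'|] ->; rewrite /cons_fam ?liftK ?unlift_none.
      exact: LC_sel.
    exact: vlcP.
  move=> g Hg.
  have Hs : forall j, \sum_i g i * (if unlift ord0 i is Some i'
     then (j == lift ord0 (lift ord0 i'))%:R else d j) =
     g ord0 * d j + \sum_i' g (lift ord0 i') * (j == lift ord0 (lift ord0 i'))%:R.
    move=> j; rewrite big_ord_recl unlift_none; congr (_ + _).
    by apply: eq_bigr => i _; rewrite liftK.
  have Hl : forall i', g (lift ord0 i') = 0.
    move=> i'; move: (Hg (lift ord0 (lift ord0 i'))); rewrite Hs.
    rewrite /d /dab !liftK mulr0 add0r.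
    rewrite (eq_bigr (fun j => (j == i')%:R * g (lift ord0 j))) ?sum_delta //.
    by move=> j _; rewrite !(inj_eq lift_inj) eq_sym mulrC.
  have H0 : g ord0 = 0.
    have E0 := Hg ord0; have E1 := Hg (lift ord0 ord0).
    rewrite Hs big1 ?addr0 in E0; last by move=> i _; rewrite Hl mul0r.
    rewrite Hs big1 ?addr0 in E1; last by move=> i _; rewrite Hl mul0r.
    move: E0 E1; rewrite /d /dab unlift_none liftK unlift_none.
    move=> /eqP; rewrite mulf_eq0 => /orP [/eqP //|Ha].
    move=> /eqP; rewrite mulf_eq0 => /orP [/eqP //|Hb].
    by move: Hab; rewrite (eqP Ha) (eqP Hb) eqxx.
  by move=> i; case: (unliftP ord0 i) => [i'|] ->.
have [Hu'' Hz] := cons_bwd HS Hw.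
have HS' : Sext (Sh S (fv f z)) := @Sh_ext S (fv f z) HS.
set Lz := [seq (x, z) | x <- e :: L2].
have HF' : FamC (Sh S (fv f z)) L1 L2 (N * c + size Lz).
  have -> : (N * c + size Lz = m)%N by rewrite size_map.
  exists u''; split => //.
  split; [move=> a' b' H i; apply: HC1 | move=> e' H i j; apply: HC2] => //.
have [t [Ht [Ht1 Ht2]]] := IH _ _ _ _ HS' (leqnn _) (elim_list HS' HF').
exists (cons_fam z t); split; first exact: cons_fwd.
split.
  move=> a' b' Hin i; case: (unliftP ord0 i) => [j|] ->; rewrite /cons_fam ?liftK ?unlift_none.
    by apply: Ht1; apply: InL_catr.
  by apply: (lin0 (vlcP d u)) => j; apply: HC1.
have Hzt : forall e'', InL e'' (e :: L2) -> forall j, tri f e'' z (t j) = 0.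
  move=> e'' He j; apply: Ht1; apply: InL_catl; exact: (InL_map (fun x => (x, z)) He).
move=> e'' He i j.
case: (unliftP ord0 i) => [i'|] ->; case: (unliftP ord0 j) => [j'|] ->;
  rewrite /cons_fam ?liftK ?unlift_none.
- exact: Ht2.
- by rewrite tri_sym23 //; apply: Hzt.
- exact: Hzt.
- case: He => [<-|He] //.
  exact: (bil0 (vlcP d u) (vlcP d u) (HC2 _ He)).
Qed.


Hypothesis Hroot3 : forall t000 t001 t010 t011 t100 t101 t110 t111 : k, exists a b : k,
  ((a != 0) || (b != 0)) /\
  a * (a * (a * t000 + b * t001) + b * (a * t010 + b * t011)) +
  b * (a * (a * t100 + b * t101) + b * (a * t110 + b * t111)) = 0.

Lemma final_step S L1 L2 : Sext S -> FamC S L1 L2 2 ->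
  exists v, (forall c, S (fun w => c * fv f v w) -> c = 0) /\
    (forall a b, InL (a, b) L1 -> tri f a b v = 0) /\
    (forall e, InL e L2 -> tri f e v v = 0) /\ tri f v v v = 0.
Proof.
move=> HS [u [Hu [HC1 HC2]]].
set u0 := u ord0; set u1 := u (lift ord0 ord0).
have [a [b [Hab Hq]]] := Hroot3 (tri f u0 u0 u0) (tri f u0 u0 u1) (tri f u0 u1 u0)
  (tri f u0 u1 u1) (tri f u1 u0 u0) (tri f u1 u0 u1) (tri f u1 u1 u0) (tri f u1 u1 u1).
set d := @dab 0 a b.
exists (vlc d u); split; last split; last split.
- move=> c Hc.
  have Hall : forall i, c * d i = 0.
    apply: Hu; apply: (HS _ _ _ Hc) => w.
    rewrite (fv_LC _ _ (vlcP d u)) mulr_sumr; apply: eq_bigr => i _; by rewrite mulrA.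
  move: (Hall ord0) (Hall (lift ord0 ord0)); rewrite /d /dab unlift_none liftK unlift_none.
  move=> /eqP; rewrite mulf_eq0 => /orP [/eqP //|Ha].
  move=> /eqP; rewrite mulf_eq0 => /orP [/eqP //|Hb].
  by move: Hab; rewrite (eqP Ha) (eqP Hb) eqxx.
- by move=> a' b' H; apply: (lin0 (vlcP d u)) => j; apply: HC1.
- by move=> e' H; apply: (bil0 (vlcP d u) (vlcP d u)) => i j; apply: HC2.
- rewrite (triL1 _ _ _ (vlcP d u)) sum2.
  rewrite !(triL2 _ _ Hf (vlcP d u)) !sum2.
  by rewrite !(triL3 _ _ Hf (vlcP d u)) !sum2.
Qed.

Definition Fam S N := exists u : 'I_N -> vect, indepmod u S.

Fixpoint Sn (H : nat -> fser) (n : nat) : fser -> Prop :=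
  if n is n'.+1 then Sh (Sn H n') (H n') else @fin_strength I k.

Lemma Sn_ext H n : Sext (Sn H n).
Proof.
elim: n => [|n IH] /=; last exact: Sh_ext.
by move=> g g' E Hg; apply: Pext Hg E.
Qed.

Lemma Sn_add H n : Sadd (Sn H n).
Proof.
elim: n => [|n IH] /=; last by apply: Sh_add => //; apply: Sn_ext.
by move=> g g' mu; apply: Padd.
Qed.

Lemma Sn_intro (H : nat -> fser) (n : nat) : forall (g : fser) (c : nat -> k),
  fin_strength (fun w => g w + \sum_(j < n) c j * H j w) -> Sn H n g.
Proof.
elim: n => [|n IH] g c Hg /=.
  by apply: Pext Hg _ => w; rewrite big_ord0 addr0.
exists (c n); apply: (IH _ c); apply: Pext Hg _ => w.
by rewrite big_ord_recr /= addrAC addrA.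
Qed.

Lemma exists_v (H : nat -> fser) n0 (L1 : seq (vect * vect)) (L2 : seq vect) :
  (forall N, Fam (@fin_strength I k) N) ->
  exists v, (forall c, Sn H n0 (fun w => c * fv f v w) -> c = 0) /\
    (forall a b, InL (a, b) L1 -> tri f a b v = 0) /\
    (forall e, InL e L2 -> tri f e v v = 0) /\ tri f v v v = 0.
Proof.
move=> H0.
have HS := @Sn_ext H n0.
have F1 : forall N, Fam (Sn H n0) N.
  elim: n0 {HS} => [|j IH] N //.
  have [u Hu] := IH N.+1.
  have [u' [_ Hu']] := S2 (H j) (@Sn_ext H j) (@Sn_add H j) Hu.
  by exists u'.
have F2 : forall N, FamC (Sn H n0) [::] [::] N.
  by move=> N; have [u Hu] := F1 N; exists u; split => //; split.
have F3 : forall N, FamC (Sn H n0) L1 [::] N.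
  move=> N; rewrite -(cats0 L1); apply: elim_list => //.
have F4 : forall Le N, FamC (Sn H n0) L1 Le N.
  elim=> [|e Le IH] N //.
  by apply: (@ISO e N _ L1 Le (N * (size Le + 4))%N).
exact: final_step.
Qed.

End PartB.
End PartA.
Lemma root2 (k : closedFieldType) (p q r s : k) : exists a b : k,
  ((a != 0) || (b != 0)) /\ a * (a * p + b * q) + b * (a * r + b * s) = 0.
Proof.
case: (eqVneq p 0) => [->|pn].
  by exists 1, 0; split; [rewrite oner_neq0 | ring].
have [x Hx] := @solve_monicpoly _ 2 (fun i => if i == 0%N then - s / p else - (q + r) / p) isT.
exists x, 1; split; first by rewrite oner_neq0 orbT.
move: Hx; rewrite !big_ord_recr big_ord0 /= add0r expr0 expr1 mulr1 => Hx.
have E : p * (x ^+ 2 - (- s / p + - (q + r) / p * x)) = 0 by rewrite Hx subrr mulr0.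
rewrite -E; field; exact: pn.
Qed.

Lemma root3 (k : closedFieldType) (t000 t001 t010 t011 t100 t101 t110 t111 : k) :
  exists a b : k,
  ((a != 0) || (b != 0)) /\
  a * (a * (a * t000 + b * t001) + b * (a * t010 + b * t011)) +
  b * (a * (a * t100 + b * t101) + b * (a * t110 + b * t111)) = 0.
Proof.
case: (eqVneq t000 0) => [->|pn].
  by exists 1, 0; split; [rewrite oner_neq0 | ring].
set c2 := t001 + t010 + t100.
set c1 := t011 + t101 + t110.
have [x Hx] := @solve_monicpoly _ 3
  (fun i => if i == 0%N then - t111 / t000 else if i == 1%N then - c1 / t000 else - c2 / t000) isT.
exists x, 1; split; first by rewrite oner_neq0 orbT.
move: Hx; rewrite !big_ord_recr big_ord0 /= add0r expr0 expr1 mulr1 => Hx.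
have E : t000 * (x ^+ 3 - (- t111 / t000 + - c1 / t000 * x + - c2 / t000 * x ^+ 2)) = 0.
  by rewrite Hx subrr mulr0.
rewrite -E /c1 /c2; field; exact: pn.
Qed.

Section PartC.
Variables (k : fieldType) (I : eqType).
Local Notation vect := (vect I k).
Local Notation table := (table I k).

Lemma pos_rcons (T : table) (v : vect) :
  positions (rcons T (v, [::])) = positions T ++ [:: (size T, None)].
Proof.
rewrite /positions size_rcons -addn1 iotaD map_cat flatten_cat /=.
congr (_ ++ _); last by rewrite add0n nth_rcons ltnn eqxx.
congr flatten; apply/eq_in_map => i; rewrite mem_iota => /andP [_ Hi].
by rewrite nth_rcons Hi.
Qed.

Lemma mem_pos (T : table) p : p \in positions T -> (p.1 < size T)%N.
Proof.
move/flatten_mapP => [i]; rewrite mem_iota add0n => /andP [_ Hi].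
by rewrite inE => /orP [/eqP -> //| /mapP [j _ ->]].
Qed.

Lemma entry_rcons (T : table) x p : (p.1 < size T)%N -> entry (rcons T x) p = entry T p.
Proof. by move=> H; rewrite /entry nth_rcons H. Qed.

Lemma entry_rcons_new (T : table) (v : vect) : entry (rcons T (v, [::])) (size T, None) = v.
Proof. by rewrite /entry nth_rcons ltnn eqxx. Qed.

Lemma entry_rcons_some (T : table) (v : vect) i j :
  entry (rcons T (v, [::])) (i, Some j) = entry T (i, Some j).
Proof.
rewrite /entry nth_rcons /=; case: ltnP => // Hi.
rewrite (nth_default _ Hi) /=; by case: eqP.
Qed.

Lemma sel_rcons f (T : table) (v : vect) p :
  c_selected f (rcons T (v, [::])) p <-> c_selected f T p.
Proof.
case: p => i [j|]; rewrite /c_selected /= ?entry_rcons_some //.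
by split; left.
Qed.

Lemma mem_pos_rcons (T : table) (v : vect) p :
  p \in positions (rcons T (v, [::])) -> p \in positions T \/ p = (size T, None).
Proof. by rewrite pos_rcons mem_cat inE => /orP [H|/eqP H]; [left|right]. Qed.

End PartC.

Lemma InL_mem (T : eqType) (x : T) s : x \in s -> InL x s.
Proof.
elim: s => //= y s IH; rewrite inE => /orP [/eqP ->|H]; by [left | right; apply: IH].
Qed.

Theorem lemma4p5 (k : closedFieldType) (I : eqType) (f : fser I k)
    (T : table I k) :
  (2%:R != 0 :> k) -> (3%:R != 0 :> k) ->
  homog 3 f ->
  rrk_infinite f ->
  good_table f T ->
  exists v : vect I k, good_table f (rcons T (v, [::])).
Proof.
move=> _ _ [_ Hf] Hrrk [Ga [[Gb1 Gb2] [Gc1 Gc2]]].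
set pos := positions T.
set ent := entry T.
set x0 := (0%N, None) : nat * option nat.
set H := fun j => fv f (ent (nth x0 pos j)).
set L1 := [seq (ent pq.1, ent pq.2) | pq <- [seq (p, q) | p <- pos, q <- pos]].
set L2 := [seq ent p | p <- pos].
have [v [Hv [Hv1 [Hv2 Hv3]]]] :=
  @exists_v k I f Hf (@root2 k) (@root3 k) H (size pos) L1 L2 Hrrk.
exists v.
set T' := rcons T (v, [::]).
have sum_pos : forall F : nat * option nat -> k,
    \sum_(p <- pos) F p = \sum_(j < size pos) F (nth x0 pos j).
  by move=> F; rewrite (big_nth x0) big_mkord.
have Hlin : forall p q, p \in pos -> q \in pos -> tri f v (ent p) (ent q) = 0.
  move=> p q Hp Hq; rewrite -tri_sym12 // -tri_sym23 //; apply: Hv1.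
  have HI : InL (p, q) [seq (p0, q0) | p0 <- pos, q0 <- pos].
    by apply: InL_mem; apply/allpairsP; exists (p, q).
  have HL := InL_map (fun pq : (nat * option nat) * (nat * option nat) => (ent pq.1, ent pq.2)) HI.
  exact HL.
have Hbil : forall p, p \in pos -> tri f (ent p) v v = 0.
  by move=> p Hp; apply: Hv2; rewrite /L2; apply: InL_map; apply: InL_mem.
pose Gv x := x = v \/ exists p, p \in pos /\ x = ent p.
have HA : forall y z, Gv y -> Gv z -> tri f v y z = 0.
  move=> y z [->|[p [Hp ->]]] [->|[q [Hq ->]]] //.
  - by rewrite tri_sym23 // tri_sym12 // Hbil.
  - by rewrite tri_sym12 // Hbil.
  - exact: Hlin.
have Hzero : forall x y z, Gv x -> Gv y -> Gv z -> (x = v \/ y = v \/ z = v) ->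
    tri f x y z = 0.
  move=> x y z Gx Gy Gz [->|[->|->]].
  - exact: HA.
  - by rewrite tri_sym12 //; apply: HA.
  - by rewrite tri_sym23 // tri_sym12 //; apply: HA.
have Gent : forall p, p \in positions T' ->
    (p \in pos /\ entry T' p = ent p) \/ (p = (size T, None) /\ entry T' p = v).
  move=> p /mem_pos_rcons [Hp|->]; last by right; split => //; apply: entry_rcons_new.
  by left; split => //; apply: entry_rcons; apply: mem_pos.
have GvT : forall p, p \in positions T' -> Gv (entry T' p).
  move=> p /Gent [[Hp ->]|[_ ->]]; [right; exists p | left] => //.
have Sn_one : forall (g : fser I k) p' (mu : k), p' \in pos ->
    fin_strength (fun w => g w + mu * fv f (ent p') w) -> Sn H (size pos) g.
  move=> g p' mu Hp' Hg.
  have Hi : (index p' pos < size pos)%N by rewrite index_mem.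
  apply: (@Sn_intro _ _ H (size pos) g (fun j => if j == index p' pos then mu else 0)).
  apply: Pext Hg _ => w; congr (_ + _).
  rewrite (bigD1 (Ordinal Hi)) //= eqxx big1 ?addr0.
    by rewrite /H nth_index.
  move=> j Hj; case: eqP => [E|_]; last by rewrite mul0r.
  by move: Hj; rewrite -val_eqE /= E eqxx.
split; [|split; [split|split]].
-
  move=> c Hc.
  have Hc' : forall l, \sum_(p <- pos) c p * vcoef (ent p) l +
      c (size T, None) * vcoef v l = 0.
    move=> l; rewrite -[RHS](Hc l) /T' pos_rcons big_cat big_seq1 /= entry_rcons_new.
    congr (_ + _); apply: eq_big_seq => p Hp.
    by rewrite entry_rcons // mem_pos.
  have cn : c (size T, None) = 0.
    case: (eqVneq (c (size T, None)) 0) => // cn; exfalso.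
    set cN := c (size T, None) in cn Hc'.
    have Hvl : forall l, vcoef v l = \sum_(p <- pos) (- c p / cN) * vcoef (ent p) l.
      move=> l; move/eqP: (Hc' l); rewrite addrC addr_eq0 => /eqP E.
      rewrite -[vcoef v l](mulKf cn) E -sumrN mulr_sumr; apply: eq_bigr => p _.
      by rewrite /cN; ring.
    have Hfv : forall w, fv f v w = \sum_(p <- pos) (- c p / cN) * fv f (ent p) w.
      by move=> w; apply: fder_lin.
    suff : (1 : k) = 0 by move/eqP; rewrite oner_eq0.
    apply: Hv.
    apply: (@Sn_intro _ _ H (size pos) _ (fun j => c (nth x0 pos j) / cN)).
    apply: (Pext (@P0 _ _)) => w; rewrite mul1r Hfv sum_pos -big_split /=.
    rewrite big1 // => j _; rewrite /H; ring.
  move=> p Hp; case: (mem_pos_rcons Hp) => [Hp'|->] //.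
  apply: (Ga c _ p Hp') => l; by move: (Hc' l); rewrite cn mul0r addr0.
-
  move=> i j Hp; case: (mem_pos_rcons Hp) => [Hp'|//].
  rewrite entry_rcons_some entry_rcons; last by apply: (mem_pos Hp').
  exact: Gb1.
-
  move=> p1 p2 p3 H1 H2 H3 Hne.
  case: (classic (entry T' p1 = v \/ entry T' p2 = v \/ entry T' p3 = v)) => [Hv'|Hv'].
    by move: Hne; rewrite (Hzero _ _ _ (GvT _ H1) (GvT _ H2) (GvT _ H3) Hv') eqxx.
  have old : forall p, p \in positions T' -> entry T' p <> v -> p \in pos /\ entry T' p = ent p.
    by move=> p Hp Hn; case: (Gent p Hp) => // [[_ E]].
  have [O1 E1] := old p1 H1 (fun E => Hv' (or_introl E)).
  have [O2 E2] := old p2 H2 (fun E => Hv' (or_intror (or_introl E))).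
  have [O3 E3] := old p3 H3 (fun E => Hv' (or_intror (or_intror E))).
  rewrite E1 E2 E3 in Hne.
  have [i [j [Hij Hperm]]] := Gb2 _ _ _ O1 O2 O3 Hne.
  exists i, j; split => //; by rewrite /T' pos_rcons mem_cat Hij.
-
  move=> p p' Hp Hp' Sp Sp' Hne Hfin.
  case: (Gent p Hp) => [[Op Ep]|[Np Ep]]; case: (Gent p' Hp') => [[Op' Ep']|[Np' Ep']].
  + apply: (Gc1 p p' Op Op' _ _ Hne).
    * exact: (iffLR (sel_rcons _ _ _ _) Sp).
    * exact: (iffLR (sel_rcons _ _ _ _) Sp').
    * by apply: Pext Hfin _ => w; rewrite Ep Ep'.
  + suff : (-1 : k) = 0 by move/eqP; rewrite oppr_eq0 oner_eq0.
    apply: Hv.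
    apply: (Sn_one _ p 1 Op); apply: Pext Hfin _ => w; rewrite Ep Ep'; ring.
  + suff : (1 : k) = 0 by move/eqP; rewrite oner_eq0.
    apply: Hv.
    apply: (Sn_one _ p' (-1) Op'); apply: Pext Hfin _ => w; rewrite Ep Ep'; ring.
  + by move: Hne; rewrite Np Np' eqxx.
-
  move=> c Hsel Hfin.
  have Hfin' : fin_strength (fun w => \sum_(p <- pos) c p * fv f (ent p) w +
      c (size T, None) * fv f v w).
    apply: Pext Hfin _ => w; rewrite /T' pos_rcons big_cat big_seq1 /= entry_rcons_new.
    congr (_ + _); apply: eq_big_seq => p Hp.
    by rewrite entry_rcons // mem_pos.
  have cn : c (size T, None) = 0.
    apply: Hv; apply: (@Sn_intro _ _ H (size pos) _ (fun j => c (nth x0 pos j))).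
    apply: Pext Hfin' _ => w; by rewrite addrC sum_pos.
  have Hold : forall p, p \in pos -> c p = 0.
    apply: Gc2.
      by move=> p Hn; apply: Hsel => /sel_rcons.
    by apply: Pext Hfin' _ => w; rewrite cn mul0r addr0.
  by move=> p Hp; case: (mem_pos_rcons Hp) => [/Hold|->].
Qed.
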